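(* Let $Y$ be a random simplicial complex on $[n]=\{0,\dots,n\}$ drawn from the lower model in the medial regime, with constants $0<p\le P<1$ such that $p\le p_\sigma\le P$ for all $\sigma$. Then $Y$ is simply connected (connected with trivial fundamental group) asymptotically almost surely, i.e. with probability tending to $1$ as $n\to\infty$.
   Context: Lower model: each non-empty proper subset $\sigma\subsetneq[n]$ is included independently with probability $p_\sigma$ into a random hypergraph $X$, and $Y$ is the largest simplicial complex contained in $X$ ($\sigma\in Y$ iff every non-empty $\tau\subseteq\sigma$ lies in $X$). Medial regime: $p,P\in(0,1)$ are independent of $n$. *)

(* Defs.v *)
From HB Require Import structures.
From mathcomp Require Import all_boot all_order all_algebra.
From mathcomp Require Import all_classical all_reals all_analysis.
From Stdlib Require Import Relations.Relation_Operators.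
Set Implicit Arguments. Unset Strict Implicit. Unset Printing Implicit Defensive.
Import Order.TTheory GRing.Theory Num.Theory.
Local Open Scope ring_scope.

(* A (finite abstract) simplicial complex / hypergraph on vertex type T is a
   set of faces {set {set T}}.  Vertex v belongs to Y iff [set v] \in Y. *)

Section Complexes.
Variable T : finType.

Definition lowerY (X : {set {set T}}) : {set {set T}} :=
  [set s : {set T} | (s != finset.set0) &&
     [forall t : {set T}, ((t != finset.set0) && (t \subset s)) ==> (t \in X)]].

(* Edge relation of the 1-skeleton (u = v allowed when [set u] is a vertex). *)
Definition cedge (Y : {set {set T}}) : rel T := fun u v => [set u; v] \in Y.

(* Elementary moves on edge paths (Spanier's edge-path group):
   u v w ~ u w  when {u,v,w} is a simplex, and  u u ~ u. *)
Inductive ep_step (Y : {set {set T}}) : seq T -> seq T -> Prop :=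
| ep_tri (a b : seq T) (u v w : T) :
    [set u; v; w] \in Y -> ep_step Y (a ++ [:: u, v, w & b]) (a ++ [:: u, w & b])
| ep_dup (a b : seq T) (u : T) :
    [set u] \in Y -> ep_step Y (a ++ [:: u, u & b]) (a ++ [:: u & b]).

Definition ep_equiv (Y : {set {set T}}) : seq T -> seq T -> Prop :=
  clos_refl_sym_trans (seq T) (ep_step Y).

(* Y is simply connected: nonempty, connected, and every closed edge path
   x :: s (x a vertex, consecutive vertices spanning simplices, ending at x)
   is edge-path equivalent to the trivial path [:: x], i.e. the edge-path group
   (= fundamental group of the geometric realization) is trivial. *)
Definition simply_connected (Y : {set {set T}}) : Prop :=
  [/\ exists v : T, [set v] \in Y,
      (forall u v : T, [set u] \in Y -> [set v] \in Y ->
         exists s : seq T, path (cedge Y) u s /\ last u s = v)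
    & (forall (x : T) (s : seq T), [set x] \in Y ->
         path (cedge Y) x s -> last x s = x -> ep_equiv Y (x :: s) [:: x])].
End Complexes.

(* Lower model on vertex set [n] = {0,...,n} = 'I_n.+1.  Each non-empty proper
   subset s is put in X independently with probability ps s. *)
Definition admissible (n : nat) (s : {set 'I_n.+1}) : bool :=
  (s != finset.set0) && (s != finset.setT).

Definition lower_weight (R : realType) (n : nat) (ps : {set 'I_n.+1} -> R)
  (X : {set {set 'I_n.+1}}) : R :=
  if X \subset [set s | admissible s] then
    \prod_(s : {set 'I_n.+1} | admissible s) (if s \in X then ps s else 1 - ps s)
  else 0.

Definition prob_simply_connected (R : realType) (n : nat)
  (ps : {set 'I_n.+1} -> R) : R :=
  \sum_(X : {set {set 'I_n.+1}} | `[< simply_connected (lowerY X) >])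
     lower_weight ps X.

(* Main.v *)
Require Import Defs.
From HB Require Import structures.
From mathcomp Require Import all_boot all_order all_algebra.
From mathcomp Require Import all_classical all_reals all_analysis.
From Stdlib Require Import Relations.Relation_Operators.
From mathcomp Require Import zify ring lra.
Import Order.TTheory GRing.Theory Num.Theory numFieldNormedType.Exports.
Set Implicit Arguments. Unset Strict Implicit. Unset Printing Implicit Defensive.

Ltac sdec := apply/setP => ?; rewrite !inE;
  repeat match goal with |- context [?a == ?b] => case: (a == b) end; done.

Section Det.
Variable T : finType.

Definition Sz (Q : {set T}) (z : T) : {set {set T}} :=
  [set s : {set T} | (s \subset z |: Q) && (z \in s)].

Lemma Y_down (X : {set {set T}}) (s t : {set T}) :
  s \in lowerY X -> t \subset s -> t != finset.set0 -> t \in lowerY X.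
Proof.
rewrite !inE => /andP[_ /forallP H] ts tn0; rewrite tn0 /=.
apply/forallP => u; apply/implyP => /andP[un0 ut].
by have /implyP := H u; apply; rewrite un0 (fintype.subset_trans ut ts).
Qed.

Lemma cone (X : {set {set T}}) (Q : {set T}) z (s : {set T}) :
  Sz Q z \subset X -> (s \in lowerY X) || (s == finset.set0) -> s \subset Q ->
  z |: s \in lowerY X.
Proof.
move=> HS Hs sQ; rewrite inE; apply/andP; split.
  by apply/finset.set0Pn; exists z; rewrite !inE eqxx.
apply/forallP => t; apply/implyP => /andP[tn0 tsub].
case zt: (z \in t).
  apply: (fintype.subsetP HS); rewrite inE zt andbT.
  by apply: (fintype.subset_trans tsub); apply: finset.setUS.
have ts : t \subset s.
  apply/fintype.subsetP => x xt; move: (fintype.subsetP tsub x xt); rewrite !inE.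
  by case/orP => // /eqP xz; move: zt; rewrite -xz xt.
case/orP: Hs => [|/eqP s0].
  by rewrite inE => /andP[_ /forallP H]; have /implyP := H t; apply; rewrite tn0 ts.
by move: tn0; rewrite s0 finset.subset0 in ts; rewrite (eqP ts) eqxx.
Qed.

Definition Hgood (X : {set {set T}}) :=
  forall a b c d : T, exists z, Sz [set a; b; c; d] z \subset X.

Lemma loop_ok (X : {set {set T}}) : Hgood X -> forall k x s,
  size s <= k -> [set x] \in lowerY X -> path (cedge (lowerY X)) x s -> last x s = x ->
  ep_equiv (lowerY X) (x :: s) [:: x].
Proof.
move=> HG; set Y := lowerY X.
elim=> [|k IH] x s.
  by case: s => // _ _ _ _; apply: rst_refl.
case: s => [|y1 [|y2 [|y3 b]]] /=.
- by move=> *; apply: rst_refl.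
- move=> _ Hx _ ->; apply: rst_step.
  exact: (@ep_dup _ Y [::] [::] x Hx).
- move=> _ Hx /andP[e1 _] ->.
  apply: (@rst_trans _ _ _ [:: x; x]); apply: rst_step.
    apply: (@ep_tri _ Y [::] [::] x y1 x).
    have -> : [set x; y1; x] = [set x; y1] by sdec.
    exact: e1.
  exact: (@ep_dup _ Y [::] [::] x Hx).
move=> Hs Hx /and4P[e1 e2 e3 pb] lb.
have [z Hz] := HG x y1 y2 y3.
have HQ : forall u, u \in [set x; y1; y2; y3] -> [set u] \subset [set x; y1; y2; y3].
  by move=> u uQ; rewrite finset.sub1set.
have Y1 : forall u v, [set u; v] \in Y -> [set u] \in Y.
  move=> u v H; apply: (Y_down H); first by rewrite finset.sub1set !inE eqxx.
  by apply/finset.set0Pn; exists u; rewrite inE.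
have Y2 : forall u v, [set u; v] \in Y -> [set v] \in Y.
  move=> u v H; apply: (Y_down H); first by rewrite finset.sub1set !inE eqxx orbT.
  by apply/finset.set0Pn; exists v; rewrite inE.
have C : forall s, s \in Y -> s \subset [set x; y1; y2; y3] -> z |: s \in Y.
  by move=> s sY sQ; apply: (cone Hz) => //; rewrite sY.
have Cz : [set z] \in Y.
  have -> : [set z] = z |: finset.set0 by sdec.
  by apply: (cone Hz); rewrite ?eqxx ?orbT ?finset.sub0set.
have T1 : [set x; z; y1] \in Y.
  have -> : [set x; z; y1] = z |: [set x; y1] by sdec.
  by apply: C => //; apply/fintype.subsetP => u; rewrite !inE => /orP[] ->; rewrite ?orbT.
have T2 : [set y1; z; y2] \in Y.
  have -> : [set y1; z; y2] = z |: [set y1; y2] by sdec.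
  by apply: C => //; apply/fintype.subsetP => u; rewrite !inE => /orP[] ->; rewrite ?orbT.
have T3 : [set y2; z; y3] \in Y.
  have -> : [set y2; z; y3] = z |: [set y2; y3] by sdec.
  by apply: C => //; apply/fintype.subsetP => u; rewrite !inE => /orP[] ->; rewrite ?orbT.
have T4 : [set z; y1; z] \in Y.
  have -> : [set z; y1; z] = z |: [set y1] by sdec.
  by apply: C; [exact: Y1 e2 | rewrite finset.sub1set !inE eqxx ?orbT].
have T5 : [set z; y2; z] \in Y.
  have -> : [set z; y2; z] = z |: [set y2] by sdec.
  by apply: C; [exact: Y1 e3 | rewrite finset.sub1set !inE eqxx ?orbT].
have Ez1 : cedge Y x z.
  rewrite /cedge; have -> : [set x; z] = z |: [set x] by sdec.
  by apply: C; [exact: Y1 e1 | rewrite finset.sub1set !inE eqxx].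
have Ez2 : cedge Y z y3.
  rewrite /cedge.
  by apply: C; [exact: Y2 e3 | rewrite finset.sub1set !inE eqxx ?orbT].
apply: (@rst_trans _ _ _ [:: x, z, y3 & b]); last first.
  apply: IH => //=; last by rewrite Ez1 Ez2.
apply: (@rst_trans _ _ _ [:: x, z, y1, y2, y3 & b]).
  apply: rst_sym; apply: rst_step; exact: (@ep_tri _ Y [::] (y2 :: y3 :: b) x z y1 T1).
apply: (@rst_trans _ _ _ [:: x, z, y1, z, y2, y3 & b]).
  apply: rst_sym; apply: rst_step; exact: (@ep_tri _ Y [:: x; z] (y3 :: b) y1 z y2 T2).
apply: (@rst_trans _ _ _ [:: x, z, y1, z, y2, z, y3 & b]).
  apply: rst_sym; apply: rst_step; exact: (@ep_tri _ Y [:: x; z; y1; z] b y2 z y3 T3).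
apply: (@rst_trans _ _ _ [:: x, z, z, y2, z, y3 & b]).
  apply: rst_step; exact: (@ep_tri _ Y [:: x] [:: y2, z, y3 & b] z y1 z T4).
apply: (@rst_trans _ _ _ [:: x, z, y2, z, y3 & b]).
  apply: rst_step; exact: (@ep_dup _ Y [:: x] [:: y2, z, y3 & b] z Cz).
apply: (@rst_trans _ _ _ [:: x, z, z, y3 & b]).
  apply: rst_step; exact: (@ep_tri _ Y [:: x] [:: y3 & b] z y2 z T5).
apply: rst_step; exact: (@ep_dup _ Y [:: x] [:: y3 & b] z Cz).
Qed.

Lemma good_sc (X : {set {set T}}) (x0 : T) : Hgood X -> simply_connected (lowerY X).
Proof.
move=> HG; split.
- have [z Hz] := HG x0 x0 x0 x0; exists z.
  have -> : [set z] = z |: finset.set0 by sdec.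
  by apply: (cone Hz); rewrite ?eqxx ?orbT ?finset.sub0set.
- move=> u v Hu Hv; have [z Hz] := HG u v u v.
  exists [:: z; v]; split => //=; rewrite /cedge andbT.
  have -> : [set u; z] = z |: [set u] by sdec.
  have E1 : z |: [set u] \in lowerY X.
    by apply: (cone Hz); rewrite ?Hu // finset.sub1set !inE eqxx ?orbT.
  have E2 : z |: [set v] \in lowerY X.
    by apply: (cone Hz); rewrite ?Hv // finset.sub1set !inE eqxx ?orbT.
  by rewrite E1 E2.
- move=> x s Hx ps ls; exact: (loop_ok HG (leqnn _) Hx ps ls).
Qed.
End Det.

Local Open Scope ring_scope.

Section Alg.
Variable R : comRingType.
Variable K : finType.

Definition Wt (a b : K -> R) (X : {set K}) : R := \prod_s (if s \in X then a s else b s).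

Lemma EL a b f g : \sum_(X : {set K}) Wt a b X * \prod_s (if s \in X then f s else g s)
  = \prod_s (a s * f s + b s * g s).
Proof.
rewrite bigA_distr; apply: eq_big => // X; rewrite /Wt -big_split /=.
by move=> _; apply: eq_bigr => s _; case: (s \in X).
Qed.
End Alg.


Section Indep.
Variable R : comRingType.
Variable T : finType.
Variables (a b : {set T} -> R).
Hypothesis Hab : forall s, a s + b s = 1.
Variable Q : {set T}.

Lemma Sz_uniq z1 z2 s : z1 \notin Q -> z2 \notin Q -> s \in Sz Q z1 -> s \in Sz Q z2 -> z1 = z2.
Proof.
move=> n1 n2; rewrite !inE => /andP[s1 _] /andP[_ z2s].
move: (fintype.subsetP s1 _ z2s); rewrite !inE => /orP[/eqP -> //|].
by rewrite (negbTE n2).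
Qed.

Lemma ind_sub (A B : {set {set T}}) :
  ((A \subset B) : bool)%:R = \prod_(s in A) ((s \in B) : bool)%:R :> R.
Proof.
case H: (A \subset B).
  by rewrite big1 // => s sA; rewrite (fintype.subsetP H s sA).
move/negbT: H => /fintype.subsetPn [s sA sB].
by rewrite (bigD1 s) //= (negbTE sB) mul0r.
Qed.

Lemma exch (Z : {set T}) (F : {set T} -> R) :
  \prod_(z in Z) \prod_(s in Sz Q z) F s = \prod_s \prod_(z in Z | s \in Sz Q z) F s.
Proof.
under eq_bigr => z _ do rewrite big_mkcond /=.
rewrite exchange_big /=; apply: eq_bigr => s _.
by rewrite big_mkcondr.
Qed.

Lemma key (Z : {set T}) : (forall z, z \in Z -> z \notin Q) ->
  \sum_(X : {set {set T}}) Wt a b X * \prod_(z in Z) ((Sz Q z \subset X) : bool)%:R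
  = \prod_(z in Z) \prod_(s in Sz Q z) a s.
Proof.
move=> nQ.
transitivity (\sum_(X : {set {set T}}) Wt a b X *
   \prod_s (if s \in X then 1 else \prod_(z in Z | s \in Sz Q z) (0:R))).
  apply: eq_bigr => X _; congr (_ * _).
  under eq_bigr => z _ do rewrite ind_sub.
  rewrite exch; apply: eq_bigr => s _.
  case: (s \in X) => /=; first by rewrite big1.
  by [].
rewrite (EL a b (fun _ => 1) (fun s => \prod_(z in Z | s \in Sz Q z) (0:R))) exch.
apply: eq_bigr => s _.
case: (pickP (fun z => (z \in Z) && (s \in Sz Q z))) => [z0 /andP[z0Z sz0] | none].
  have rest : forall z, (z \in Z) && (s \in Sz Q z) && (z != z0) = false.
    move=> z; apply/negbTE/negP => /andP[/andP[zZ sz] /eqP nz]; apply: nz.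
    exact: (Sz_uniq (nQ _ zZ) (nQ _ z0Z) sz sz0).
  rewrite (bigD1 z0) /=; last by rewrite z0Z sz0.
  rewrite [in RHS](bigD1 z0) /=; last by rewrite z0Z sz0.
  by rewrite !big_pred0 // mul0r mulr0 addr0.
rewrite (big_pred0 _ _ _ _ none) (big_pred0 _ _ _ _ none).
by rewrite !mulr1 Hab.
Qed.

Lemma indep :
  \sum_(X : {set {set T}}) Wt a b X *
     (([forall z, (z \notin Q) ==> ~~ (Sz Q z \subset X)]) : bool)%:R
  = \prod_z ((if z \in Q then 0 else -1) * \prod_(s in Sz Q z) a s + 1).
Proof.
set c := fun z => if z \in Q then 0 else -1 : R.
transitivity (\sum_(X : {set {set T}}) Wt a b X *
   \prod_z (c z * ((Sz Q z \subset X) : bool)%:R + 1)).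
  apply: eq_bigr => X _; congr (_ * _).
  case H: [forall _, _].
    rewrite big1 // => z _; rewrite /c; case zQ: (z \in Q); first by rewrite mul0r add0r.
    by move/forallP: H => /(_ z); rewrite zQ /= => /negbTE ->; rewrite mulr0 add0r.
  move/negbT: H; rewrite negb_forall => /existsP [z]; rewrite negb_imply negbK => /andP[zQ zS].
  by rewrite (bigD1 z) //= /c (negbTE zQ) zS mulN1r addNr mul0r.
have dist : forall (F : T -> R), \prod_z (F z + 1) =
   \sum_(Z in {set T}) \prod_z (if z \in Z then F z else 1).
  by move=> F; exact: (bigA_distr 1 +%R F (fun _ => 1)).
transitivity (\sum_(X : {set {set T}}) \sum_(Z in {set T}) Wt a b X *
   \prod_z (if z \in Z then c z * ((Sz Q z \subset X) : bool)%:R else 1)).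
  apply: eq_bigr => X _.
  by rewrite (dist (fun z => c z * ((Sz Q z \subset X) : bool)%:R)) big_distrr.
rewrite exchange_big /= (dist (fun z => c z * \prod_(s in Sz Q z) a s)); apply: eq_bigr => Z _.
have splt : forall (F : T -> R), \prod_z (if z \in Z then c z * F z else 1)
    = \prod_(z in Z) c z * \prod_(z in Z) F z.
  by move=> F; rewrite -big_split /= [RHS]big_mkcond.
transitivity (\prod_(z in Z) c z * \sum_(X : {set {set T}}) Wt a b X *
   \prod_(z in Z) ((Sz Q z \subset X) : bool)%:R).
  rewrite big_distrr /=; apply: eq_bigr => X _.
  by rewrite (splt (fun z => ((Sz Q z \subset X) : bool)%:R)) mulrCA.
rewrite (splt (fun z => \prod_(s in Sz Q z) a s)).
case: (boolP [exists z in Z, z \in Q]) => [/existsP [z /andP[zZ zQ]] | H].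
  by rewrite (bigD1 z) //= /c zQ mul0r !mul0r.
rewrite key //.
move=> z zZ; apply/negP => zQ; move/negP: H; apply; apply/existsP; exists z.
by rewrite zZ.
Qed.
End Indep.

Lemma cardU1_le (T : finType) (x : T) (A : {set T}) : (#|x |: A| <= #|A|.+1)%N.
Proof. by rewrite cardsU1; case: (x \notin A). Qed.

Section Main.
Variable R : realType.
Variable n : nat.
Local Notation T := ('I_n.+1).
Variables (p : R) (q : {set T} -> R).
Hypothesis hp : 0 < p.
Hypothesis hp1 : p <= 1.
Hypothesis n5 : (5 <= n)%N.
Hypothesis hq : forall s, admissible s -> p <= q s /\ q s <= 1.

Definition aa (s : {set T}) : R := if admissible s then q s else 0.
Definition bb (s : {set T}) : R := if admissible s then 1 - q s else 1.

Lemma aa_ge0 s : 0 <= aa s.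
Proof. rewrite /aa; case: ifP => // /hq [h1 _]; exact: le_trans (ltW hp) h1. Qed.
Lemma aa_le1 s : aa s <= 1.
Proof. rewrite /aa; case: ifP => // /hq [_ h2] //. Qed.
Lemma bb_ge0 s : 0 <= bb s.
Proof. rewrite /bb; case: ifP => // /hq [_ h2]; by rewrite subr_ge0. Qed.
Lemma abE s : aa s + bb s = 1.
Proof. rewrite /aa /bb; case: ifP => _; by rewrite ?add0r // addrC subrK. Qed.

Lemma LW X : lower_weight q X = Wt aa bb X.
Proof.
rewrite /lower_weight /Wt; case: ifP => H.
  rewrite [RHS](bigID (@admissible n)) /= [X in _ * X]big1 ?mulr1.
    by apply: eq_bigr => s adm; rewrite /aa /bb adm.
  move=> s nadm; have sX : s \notin X.
    by apply/negP => sX; move: (fintype.subsetP H s sX); rewrite inE (negbTE nadm).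
  by rewrite (negbTE sX) /bb (negbTE nadm).
move/negbT: H => /fintype.subsetPn [s sX]; rewrite inE => nadm.
by rewrite (bigD1 s) //= sX /aa (negbTE nadm) mul0r.
Qed.

Lemma W_ge0 X : 0 <= Wt aa bb X.
Proof. by apply: prodr_ge0 => s _; case: (s \in X); rewrite ?aa_ge0 ?bb_ge0. Qed.

Lemma W_sum1 : \sum_(X : {set {set T}}) Wt aa bb X = 1.
Proof.
have := bigA_distr 1 +%R aa bb; rewrite big1 => [E|s _]; last exact: abE.
by rewrite [RHS]E.
Qed.

Definition Qt (t : T * T * T * T) : {set T} := [set t.1.1.1; t.1.1.2; t.1.2; t.2].
Definition Ht (t : T * T * T * T) (X : {set {set T}}) : bool :=
  [forall z, (z \notin Qt t) ==> ~~ (Sz (Qt t) z \subset X)].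

Lemma card_zQ z t : (#|z |: Qt t| <= 5)%N.
Proof.
have -> : z |: Qt t = [set x in [:: z; t.1.1.1; t.1.1.2; t.1.2; t.2]].
  apply/setP => x; rewrite !inE; by rewrite !orbA.
by rewrite cardsE; apply: (leq_trans (card_size _)).
Qed.

Lemma card_Q t : (#|Qt t| <= 4)%N.
Proof.
have -> : Qt t = [set x in [:: t.1.1.1; t.1.1.2; t.1.2; t.2]].
  apply/setP => x; rewrite !inE; by rewrite !orbA.
by rewrite cardsE; apply: (leq_trans (card_size _)).
Qed.

Lemma adm_Sz t z s : s \in Sz (Qt t) z -> admissible s.
Proof.
rewrite inE => /andP[sQ zs]; rewrite /admissible; apply/andP; split.
  by apply/finset.set0Pn; exists z.
apply/negP => /eqP sT; move: (subset_leq_card sQ); rewrite sT cardsT card_ord.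
move=> H; have := leq_trans H (card_zQ z t); rewrite ltnS => H2.
by move: (leq_trans n5 H2).
Qed.

Lemma card_Sz t z : (#|Sz (Qt t) z| <= 32)%N.
Proof.
have sub : Sz (Qt t) z \subset powerset (z |: Qt t).
  by apply/fintype.subsetP => s; rewrite inE powersetE => /andP[].
apply: (leq_trans (subset_leq_card sub)); rewrite card_powerset.
by apply: (leq_trans (leq_pexp2l _ (card_zQ z t))).
Qed.

Lemma pi_ge t z : p ^+ 32 <= \prod_(s in Sz (Qt t) z) aa s.
Proof.
apply: (le_trans (ler_wiXn2l (ltW hp) hp1 (card_Sz t z))).
rewrite -prodr_const; apply: ler_prod => s sS; rewrite (ltW hp) /=.
by rewrite /aa (adm_Sz sS); case: (hq (adm_Sz sS)).
Qed.

Lemma pi_01 t z : 0 <= \prod_(s in Sz (Qt t) z) aa s <= 1.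
Proof.
by rewrite prodr_ge0 ?prodr_ile1 // => s _; rewrite ?aa_ge0 ?aa_le1.
Qed.

Lemma card_nQ t : (n - 3 <= #|[pred z | z \notin Qt t]|)%N.
Proof.
have h := cardsC (Qt t); rewrite card_ord in h.
have -> : #|[pred z | z \notin Qt t]| = #|~: Qt t| by apply: eq_card => z; rewrite !inE.
have := card_Q t; lia.
Qed.

Lemma r01 : 0 <= 1 - p ^+ 32 <= 1.
Proof.
rewrite subr_ge0 exprn_ile1 ?(ltW hp) //=.
by rewrite lerBlDr lerDl exprn_ge0 ?(ltW hp).
Qed.

Lemma Pt_bound t :
  \sum_(X : {set {set T}}) Wt aa bb X * (Ht t X)%:R <= (1 - p ^+ 32) ^+ (n - 3).
Proof.
rewrite /Ht (indep abE (Qt t)).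
set r := 1 - p ^+ 32.
have [r0 r1] := andP r01.
apply: (@le_trans _ _ (\prod_z (if z \in Qt t then 1 else r))).
  apply: ler_prod => z _; case: (z \in Qt t); first by rewrite mul0r add0r lexx ler01.
  have [h0 h1] := andP (pi_01 t z); have h2 := pi_ge t z.
  rewrite mulN1r addrC subr_ge0 h1 /=; rewrite /r; exact: lerB.
have -> : \prod_z (if z \in Qt t then 1 else r) = \prod_(z in [pred z | z \notin Qt t]) r.
  rewrite [RHS]big_mkcond; apply: eq_bigr => z _; rewrite [in RHS]inE /=; by case: (z \in Qt t).
rewrite GRing.prodr_const. exact: (ler_wiXn2l r0 r1 (card_nQ t)).
Qed.

Definition Ev (X : {set {set T}}) : bool :=
  [forall t : T * T * T * T, [exists z, Sz (Qt t) z \subset X]].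

Lemma bound :
  1 - (#|{: T * T * T * T}|)%:R * (1 - p ^+ 32) ^+ (n - 3) <= prob_simply_connected q /\
  prob_simply_connected q <= 1.
Proof.
rewrite /prob_simply_connected; split; last first.
  rewrite -W_sum1 big_mkcond; apply: ler_sum => X _; rewrite LW.
  by case: ifP => _; rewrite ?W_ge0.
have step1 : \sum_(X : {set {set T}}) Wt aa bb X * (Ev X)%:R <=
   \sum_(X | `[< simply_connected (lowerY X) >]) lower_weight q X.
  rewrite [X in _ <= X]big_mkcond; apply: ler_sum => X _; rewrite LW.
  case E: (Ev X).
    rewrite asboolT ?mulr1 //; apply: (good_sc ord0) => a b c d.
    by move/forallP: E => /(_ (a, b, c, d)) /existsP [z Hz]; exists z.
  by rewrite mulr0; case: ifP => _; rewrite ?W_ge0.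
have step2 : \sum_(X : {set {set T}}) Wt aa bb X * (Ev X)%:R =
   1 - \sum_(X : {set {set T}}) Wt aa bb X * (~~ Ev X)%:R.
  transitivity (\sum_(X : {set {set T}}) Wt aa bb X -
     \sum_(X : {set {set T}}) Wt aa bb X * (~~ Ev X)%:R); last by rewrite W_sum1.
  rewrite -sumrB; apply: eq_bigr => X _.
  by case: (Ev X); rewrite /= ?mulr1 ?mulr0 ?subr0 ?subrr.
have step3 : \sum_(X : {set {set T}}) Wt aa bb X * (~~ Ev X)%:R <=
   \sum_(t : T * T * T * T) \sum_(X : {set {set T}}) Wt aa bb X * (Ht t X)%:R.
  rewrite exchange_big; apply: ler_sum => X _; rewrite -mulr_sumr.
  apply: ler_wpM2l; first exact: W_ge0.
  case E: (Ev X) => /=; first by apply: sumr_ge0 => t _.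
  move/negbT: E; rewrite negb_forall => /existsP [t]; rewrite negb_exists => /forallP Hn.
  have Htt : Ht t X by apply/forallP => z; apply/implyP => _; exact: Hn z.
  rewrite (bigD1 t) //= Htt lerDl; by apply: sumr_ge0 => u _.
have step4 : \sum_(t : T * T * T * T) \sum_(X : {set {set T}}) Wt aa bb X * (Ht t X)%:R <=
   (#|{: T * T * T * T}|)%:R * (1 - p ^+ 32) ^+ (n - 3).
  apply: (@le_trans _ _ (\sum_(t : T * T * T * T) (1 - p ^+ 32) ^+ (n - 3))).
    by apply: ler_sum => t _; exact: Pt_bound.
  by rewrite sumr_const mulr_natl.
apply: le_trans step1; rewrite step2 lerB //.
exact: le_trans step3 step4.
Qed.

End Main.

Section Real.
Variable R : realType.

Lemma bern (x : R) k : 0 <= x -> x <= 1 -> 1 - k%:R * x <= (1 - x) ^+ k.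
Proof.
move=> x0 x1; elim: k => [|k IH]; first by rewrite mul0r subr0 expr0.
rewrite exprSr; apply: (@le_trans _ _ ((1 - k%:R * x) * (1 - x))).
  rewrite -natr1; have k0 : 0 <= k%:R :> R by [].
  nra.
by apply: ler_wpM2r => //; rewrite subr_ge0.
Qed.

Lemma bern2 (x : R) m : 0 <= x -> x <= 1 -> (1 - x) ^+ m * (1 + m%:R * x) <= 1.
Proof.
move=> x0 x1; elim: m => [|m IH]; first by rewrite mul0r addr0 expr0 mulr1.
rewrite exprSr -mulrA; apply: le_trans IH.
have h0 : 0 <= (1 - x) ^+ m by apply: exprn_ge0; rewrite subr_ge0.
apply: ler_wpM2l => //; rewrite -natr1; have k0 : 0 <= m%:R :> R by [].
nra.
Qed.

Lemma poly_geo (x : R) m : 0 < x -> x <= 1 ->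
  (m + 4)%:R * (1 - x) ^+ m <= 4 + x^-1.
Proof.
move=> x0 x1; have := bern2 m (ltW x0) x1.
have h0 : 0 <= (1 - x) ^+ m by apply: exprn_ge0; rewrite subr_ge0.
have y0 : 0 < x^-1 by rewrite invr_gt0.
have xy : x * x^-1 = 1 by rewrite mulfV // gt_eqF.
have k0 : 0 <= m%:R :> R by [].
rewrite natrD => hb.
have e : (m%:R + 4%:R) <= (4 + x^-1) * (1 + m%:R * x) :> R.
  have -> : (4 + x^-1) * (1 + m%:R * x) = 4 + 4 * m%:R * x + x^-1 + m%:R * (x * x^-1) by ring.
  rewrite xy; have : 0 <= 4 * m%:R * x :> R by rewrite !mulr_ge0 // ltW.
  lra.
apply: (@le_trans _ _ ((4 + x^-1) * (1 + m%:R * x) * (1 - x) ^+ m)).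
  exact: ler_wpM2r.
rewrite -mulrA mulrC; rewrite -[X in _ <= X]mul1r; apply: ler_wpM2r.
  by apply: addr_ge0 => //; apply: ltW.
by rewrite mulrC.
Qed.
End Real.

Lemma fin_ineq (R : realType) (u v a b pr Cst : R) :
  1 - a * a * a * a * u <= pr -> u <= v ^+ 5 -> 0 <= u -> a * v <= Cst -> 0 <= v ->
  b <= a -> 0 <= b -> b * (1 - pr) <= Cst ^+ 5.
Proof.
move=> lo uv u0 av v0 ba b0.
have a0 : 0 <= a by apply: le_trans ba.
have av0 : 0 <= a * v by apply: mulr_ge0.
apply: (@le_trans _ _ ((a * v) ^+ 5)); last first.
  by apply: lerXn2r; rewrite ?nnegrE //; apply: le_trans av0 av.
rewrite exprMn.
have a4 : 0 <= a * a * a * a by rewrite !mulr_ge0.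
have E1 : 1 - pr <= a * a * a * a * u by lra.
apply: (@le_trans _ _ (b * (a * a * a * a * u))); first exact: ler_wpM2l.
apply: (@le_trans _ _ (a * (a * a * a * a * u))).
  by apply: ler_wpM2r => //; apply: mulr_ge0.
have -> : a * (a * a * a * a * u) = a ^+ 5 * u by rewrite !exprS expr0; ring.
apply: (@le_trans _ _ (a ^+ 5 * v ^+ 5)); first by apply: ler_wpM2l => //; apply: exprn_ge0.
by [].
Qed.

Unset Implicit Arguments. Set Strict Implicit.
Local Open Scope classical_set_scope.
Local Open Scope ring_scope.

Theorem proposition6p3 (R : realType) (p P : R)
  (ps : forall n : nat, {set 'I_n.+1} -> R) :
  0 < p -> p <= P -> P < 1 ->
  (forall (n : nat) (s : {set 'I_n.+1}), admissible s -> p <= ps n s /\ ps n s <= P) ->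
  prob_simply_connected (ps n) @[n --> \oo] --> (1 : R^o).
Proof.
move=> p0 pP P1 hps.
have p1 : p <= 1 by apply: le_trans pP (ltW P1).
set c := p ^+ 32.
have c0 : 0 < c by apply: exprn_gt0.
have c1 : c <= 1 by apply: exprn_ile1 => //; apply: ltW.
set x := c / 5.
have x0 : 0 < x by apply: divr_gt0.
have x1 : x <= 1 by rewrite /x ler_pdivrMr //; lra.
set Cst := 4 + x^-1.
have key : forall m, (5 <= m)%N ->
    0 <= 1 - prob_simply_connected (ps m) /\
    m%:R * (1 - prob_simply_connected (ps m)) <= Cst ^+ 5.
  move=> m m5.
  have hq : forall s, admissible s -> p <= ps m s /\ ps m s <= 1.
    by move=> s /(hps m) [h1 h2]; split => //; apply: le_trans h2 (ltW P1).
  have [lo hi] := bound p0 p1 m5 hq.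
  split; first by rewrite subr_ge0.
  rewrite !card_prod card_ord !natrM in lo.
  move: lo hi; generalize (prob_simply_connected (ps m)) => prob lo hi.
  have [k mk] : exists k, m = (k + 3)%N by exists (m - 3)%N; lia.
  have km : (m - 3)%N = k by lia.
  rewrite km in lo.
  have rx : 1 - p ^+ 32 <= (1 - x) ^+ 5.
    have := bern 5 (ltW x0) x1.
    by rewrite /x mulrC divfK ?pnatr_eq0.
  have r0 : 0 <= 1 - p ^+ 32 by rewrite subr_ge0.
  have ex0 : 0 <= (1 - x) by rewrite subr_ge0.
  have rk : (1 - p ^+ 32) ^+ k <= ((1 - x) ^+ k) ^+ 5.
    rewrite exprAC; apply: lerXn2r => //; rewrite nnegrE //; exact: exprn_ge0.
  have rk0 : 0 <= (1 - p ^+ 32) ^+ k by apply: exprn_ge0.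
  have pg := poly_geo k x0 x1.
  have b0 : 0 <= (1 - x) ^+ k by apply: exprn_ge0.
  have M0 : m.+1 = (k + 4)%N by rewrite mk -addnS.
  have M : m.+1%:R = (k + 4)%:R :> R by rewrite M0.
  have mm0 : (m <= k + 4)%N by rewrite mk leq_add2l.
  have mm1 : m%:R <= (k + 4)%:R :> R by rewrite ler_nat.
  have mm : 0 <= m%:R :> R by apply: ler0n.
  rewrite M in lo.
  exact: (@fin_ineq _ _ _ _ _ _ _ lo rk rk0 pg b0 mm1 mm).
apply/cvgrPdist_le => e e0.
apply: filterS2 (nbhs_infty_ge 5) (nbhs_infty_ger (Cst ^+ 5 / e)) => m m5 mC.
have [h1 h2] := key m m5.
move: h1 h2; generalize (prob_simply_connected (ps m)) => pr h1 h2.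
rewrite (ger0_norm h1).
have mpos : 0 < m%:R :> R by rewrite ltr0n; apply: leq_trans m5.
rewrite ler_pdivrMr // in mC.
rewrite -(ler_pM2l mpos); apply: le_trans h2 _.
by move: mC; rewrite mulrC.
Qed.
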